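(* $\mathfrak{U}(\mathbb{R})$ is a hyperfinite dimensional vector space over $\mathbb{R}^*$, and $\dim\mathfrak{U}(\mathbb{R})\le \ell\cdot\dim\widetilde{\mathcal{C}^1(\mathbb{R})}$.
   Context: Framework (Λ-limits / nonstandard analysis): let $\mathfrak{X}=\mathcal{P}_{fin}(\mathfrak{F}(\mathbb{R},\mathbb{R}))$ be the set of finite sets of real functions on $\mathbb{R}$, directed by inclusion. $\mathbb{R}^*\supset\mathbb{R}$ is a non-Archimedean ordered field whose elements are Λ-limits of nets $\varphi:\mathfrak{X}\to\mathbb{R}$; Λ-limits of nets of sets/functions give internal sets/functions; natural extensions $E^*$, $f^*$ are Λ-limits of constant nets; hyperfinite sets/sums/dimensions are Λ-limits of finite ones. For $\lambda\in\mathfrak{X}$ let $V_\lambda$ be the span of $\lambda$. An internal function $u=\lim_{\lambda\uparrow\Lambda}u_\lambda$ is an ultrafunction if $u_\lambda\in V_\lambda$ for all $\lambda$; for a vector space $W$ of real functions, $\widetilde{W}=W^*\cap\{\text{ultrafunctions}\}$ (a hyperfinite dimensional space). Grid: fix a positive infinite $\beta\in\mathbb{R}^*$ and a hyperfinite set $\Gamma=\{\gamma_0<\dots<\gamma_\ell\}\subset\mathbb{R}^*$ ($\ell$ hypernatural) with $\gamma_0=-\beta$, $\gamma_\ell=\beta$, $0<\gamma_{j+1}-\gamma_j<\eta$ for a fixed infinitesimal $\eta$, and $\mathbb{R}\subseteq\Gamma$. For $j=0,\dots,\ell-1$, $\mathbb{I}_j=(\gamma_j,\gamma_{j+1})_{\mathbb{R}^*}$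 and $\chi_j$ is its characteristic function. $\mathfrak{U}(\mathbb{R})$ is the set of functions $u:[-\beta,\beta]\to\mathbb{R}^*$ representable as an internal hyperfinite sum $u=\sum_{j=0}^{\ell-1}v_j\chi_j$ with each $v_j\in\widetilde{\mathcal{C}^1(\mathbb{R})}$. *)

(* Defs.v *)
(* Ultrapower (Lambda-limit) model of R^*, at the level of nets. *)
From HB Require Import structures.
From mathcomp Require Import all_boot all_order all_algebra.
From mathcomp Require Import all_classical all_reals all_analysis.
Set Implicit Arguments. Unset Strict Implicit. Unset Printing Implicit Defensive.
Import Order.TTheory GRing.Theory Num.Theory.
Import numFieldNormedType.Exports.
Local Open Scope classical_set_scope.
Local Open Scope ring_scope.

Definition Xfin (R : realType) := {A : set (R -> R) | finite_set A}.

(** Λ is given by a fine ultrafilter U on 𝔛 (directed by inclusion):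
    Λ-lim φ = Λ-lim ψ  iff  {λ | φ λ = ψ λ} ∈ U. *)
Definition fine_ultrafilter (R : realType) (U : set (set (Xfin R))) : Prop :=
  [/\ U setT /\ ~ U set0,
      (forall A B, U A -> A `<=` B -> U B),
      (forall A B, U A -> U B -> U (A `&` B)),
      (forall A, U A \/ U (~` A)) &
      (forall l : Xfin R, U [set m : Xfin R | proj1_sig l `<=` proj1_sig m])].

Definition ae (R : realType) (U : set (set (Xfin R))) (P : Xfin R -> Prop) : Prop :=
  U [set l | P l].

Definition positive_infinite (R : realType) (U : set (set (Xfin R))) (b : Xfin R -> R) :=
  forall n : nat, ae U (fun l => n%:R < b l).
Definition infinitesimal (R : realType) (U : set (set (Xfin R))) (e : Xfin R -> R) :=
  forall eps : R, 0 < eps -> ae U (fun l => `|e l| < eps).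

Definition grid (R : realType) (U : set (set (Xfin R))) (beta eta : Xfin R -> R)
    (ell : Xfin R -> nat) (gamma : Xfin R -> nat -> R) : Prop :=
  ae U (fun l => [/\ gamma l 0%N = - beta l, gamma l (ell l) = beta l &
     forall j : nat, (j < ell l)%N ->
       0 < gamma l j.+1 - gamma l j /\ gamma l j.+1 - gamma l j < eta l]).

Definition chi (R : realType) (g : nat -> R) (j : nat) (x : R) : R :=
  if (g j < x) && (x < g j.+1) then 1 else 0.

Definition C1 (R : realType) (f : R -> R) : Prop :=
  (forall x : R, derivable f x 1) /\ continuous (derive1 f).

Definition span (R : realType) (A : set (R -> R)) : set (R -> R) :=
  [set f | exists (n : nat) (c : 'I_n -> R) (g : 'I_n -> R -> R),
     (forall i, A (g i)) /\ f = (fun x => \sum_(i < n) c i * g i x)].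

Definition fdim (R : realType) (D : set R) (W : set (R -> R)) (n : nat) : Prop :=
  exists b : 'I_n -> R -> R,
    [/\ (forall c : 'I_n -> R, W (fun x => \sum_(i < n) c i * b i x)),
        (forall c : 'I_n -> R,
            (forall x, D x -> \sum_(i < n) c i * b i x = 0) -> forall i, c i = 0) &
        (forall f, W f -> exists c : 'I_n -> R,
            forall x, D x -> f x = \sum_(i < n) c i * b i x)].

Definition eqD (R : realType) (U : set (set (Xfin R))) (D : Xfin R -> set R)
    (u w : Xfin R -> R -> R) : Prop :=
  ae U (fun l => forall x, D l x -> u l x = w l x).

(** An internal set A of internal functions (on domain Λ-lim D_λ) is a hyperfinite
    dimensional R^*-vector space of (hypernatural) dimension Λ-lim d_λ. *)
Definition hyperfinite_dim (R : realType) (U : set (set (Xfin R))) (D : Xfin R -> set R)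
    (A : (Xfin R -> R -> R) -> Prop) (d : Xfin R -> nat) : Prop :=
  exists W : Xfin R -> set (R -> R),
    ae U (fun l => fdim (D l) (W l) (d l)) /\
    forall u, A u <-> exists w, ae U (fun l => W l (w l)) /\ eqD U D u w.

(** C̃^1(R) = (C^1)^* ∩ {ultrafunctions} *)
Definition C1tilde (R : realType) (U : set (set (Xfin R))) (v : Xfin R -> R -> R) : Prop :=
  ae U (fun l => C1 (v l) /\ span (proj1_sig l) (v l)).

Definition domB (R : realType) (beta : Xfin R -> R) (l : Xfin R) : set R :=
  [set x | - beta l <= x <= beta l].

Definition UR (R : realType) (U : set (set (Xfin R))) (beta : Xfin R -> R)
    (ell : Xfin R -> nat) (gamma : Xfin R -> nat -> R) (u : Xfin R -> R -> R) : Prop :=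
  exists v : Xfin R -> nat -> R -> R,
    ae U (fun l => forall j, (j < ell l)%N -> C1 (v l j) /\ span (proj1_sig l) (v l j)) /\
    eqD U (domB beta) u
        (fun l x => \sum_(j < ell l) v l j x * chi (gamma l) j x).

(* Main.v *)
Require Import Defs.
From HB Require Import structures.
From mathcomp Require Import all_boot all_order all_algebra.
From mathcomp Require Import all_classical all_reals all_analysis.
From mathcomp Require Import ring.
Import Order.TTheory GRing.Theory Num.Theory.
Import numFieldNormedType.Exports.
Local Open Scope classical_set_scope.
Local Open Scope ring_scope.
Set Implicit Arguments. Unset Strict Implicit. Unset Printing Implicit Defensive.

Section LA.
Variable R : realType.

Definition closedS (S : set (R -> R)) :=
  S (fun _ => 0) /\ forall a f g, S f -> S g -> S (fun x => a * f x + g x).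

Definition spanF (D : set R) (m : nat) (g : nat -> R -> R) (f : R -> R) :=
  exists c : nat -> R, forall x, D x -> f x = \sum_(i < m) c i * g i x.

Lemma closed_sum S n (c : 'I_n -> R) (b : 'I_n -> R -> R) :
  closedS S -> (forall i, S (b i)) -> S (fun x => \sum_(i < n) c i * b i x).
Proof.
move=> [S0 SD] Sb; elim: n c b Sb => [|n IH] c b Sb.
  by have -> : (fun x => \sum_(i < 0) c i * b i x) = (fun _ => 0)
    by apply: funext => x; rewrite big_ord0.
have -> : (fun x => \sum_(i < n.+1) c i * b i x) =
  (fun x => c ord_max * b ord_max x +
     \sum_(i < n) c (widen_ord (leqnSn n) i) * b (widen_ord (leqnSn n) i) x).
  by apply: funext => x; rewrite big_ord_recr addrC.
by apply: SD => //; apply: IH.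
Qed.

Lemma spanF_closed D m g : closedS (spanF D m g).
Proof.
split.
  by exists (fun _ => 0) => x _; rewrite big1 // => i _; rewrite mul0r.
move=> a f h [c Hc] [d Hd]; exists (fun i => a * c i + d i) => x Dx.
rewrite Hc // Hd // mulr_sumr -big_split /=; apply: eq_bigr => i _.
by rewrite mulrDl mulrA.
Qed.

Lemma spanF_ext D m g f f' : spanF D m g f -> (forall x, D x -> f' x = f x) ->
  spanF D m g f'.
Proof. by move=> [c Hc] E; exists c => x Dx; rewrite E // Hc. Qed.

Definition ext T n (h : 'I_n -> T) (t : T) (i : 'I_n.+1) : T :=
  if unlift ord_max i is Some j then h j else t.

Lemma ext_widen T n (h : 'I_n -> T) t i : ext h t (widen_ord (leqnSn n) i) = h i.
Proof.
have -> : widen_ord (leqnSn n) i = lift ord_max i by apply/val_inj; rewrite /= /bump leqNgt ltn_ord.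
by rewrite /ext liftK.
Qed.

Lemma ext_max T n (h : 'I_n -> T) t : ext h t ord_max = t.
Proof. by rewrite /ext unlift_none. Qed.

Lemma ext_sum n (c : 'I_n.+1 -> R) (b : 'I_n -> R -> R) f0 x :
  \sum_(i < n.+1) c i * ext b f0 i x =
  \sum_(i < n) c (widen_ord (leqnSn n) i) * b i x + c ord_max * f0 x.
Proof.
rewrite big_ord_recr /= ext_max; congr (_ + _); apply: eq_bigr => i _.
by rewrite ext_widen.
Qed.

Lemma fdim_main (D : set R) m : forall (g : nat -> R -> R) (S : set (R -> R)),
  closedS S -> (forall f, S f -> spanF D m g f) ->
  exists n, (n <= m)%N /\ fdim D S n.
Proof.
elim: m => [|m IH] g S cS Sspan.
  exists 0%N; split => //; exists (fun _ _ => 0); split.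
  - move=> c; have -> : (fun x : R => \sum_(i < 0) c i * (0:R)) = (fun _ => 0)
      by apply: funext => x; rewrite big_ord0.
    by case: cS.
  - by move=> c _ [].
  - move=> f Sf; exists (fun _ => 0) => x Dx.
    by case: (Sspan f Sf) => c /(_ x Dx) ->; rewrite !big_ord0.
pose g' i := g i.+1.
have Hdec : forall f, spanF D m.+1 g f -> exists a0 (a : nat -> R),
    forall x, D x -> f x = a0 * g 0%N x + \sum_(i < m) a i * g' i x.
  move=> f [c Hc]; exists (c 0%N), (fun i => c i.+1) => x Dx.
  by rewrite Hc // big_ord_recl.
case: (pselect (forall f, S f -> spanF D m g' f)) => [Hall|].
  by have [n [nm fd]] := IH g' S cS Hall; exists n; split => //; apply: leqW.
move=> /existsNP [f0 /not_implyP [Sf0 nf0]].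
have [c0 [c Hf0]] := Hdec f0 (Sspan f0 Sf0).
have c0N : c0 != 0.
  apply/negP => /eqP c00; apply: nf0; exists c => x Dx.
  by rewrite Hf0 // c00 mul0r add0r.
pose S' := [set f | S f /\ spanF D m g' f].
have cS' : closedS S'.
  case: cS => S0 SD; case: (spanF_closed D m g') => P0 PD.
  split; first by split.
  by move=> a f h [? ?] [? ?]; split; [apply: SD | apply: PD].
have [n [nm [b [bS bind bspan]]]] := IH g' S' cS' (fun f Hf => Hf.2).
have bS1 : forall i, S' (b i).
  move=> i; have := bS (fun j => if j == i then 1 else 0).
  congr S'; apply: funext => x.
  rewrite (bigD1 i) //= eqxx mul1r big1 ?addr0 // => j /negPf ->.
  by rewrite mul0r.
exists n.+1; split => //.
exists (ext b f0); split.
- move=> c'; apply: closed_sum => // i; rewrite /ext.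
  by case: (unlift _ i) => [j|] //; case: (bS1 j).
- move=> c' H0.
  have cmax : c' ord_max = 0.
    apply/eqP/negP => /negP cN; apply: nf0.
    have [_ Hsp] := bS (fun i => c' (widen_ord (leqnSn n) i)).
    apply: (spanF_ext (f := fun x => (- (c' ord_max)^-1) *
       (\sum_(i < n) c' (widen_ord (leqnSn n) i) * b i x) + 0)).
      by apply: (spanF_closed D m g').2 => //; apply: (spanF_closed D m g').1.
    move=> x Dx; have := H0 x Dx; rewrite ext_sum addr0 => E.
    have -> : \sum_(i < n) c' (widen_ord (leqnSn n) i) * b i x =
       - (c' ord_max * f0 x) by apply/eqP; rewrite -addr_eq0 E.
    by rewrite mulrN mulNr opprK mulrA mulVf // mul1r.
  have cw : forall i, c' (widen_ord (leqnSn n) i) = 0.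
    apply: bind => x Dx; have := H0 x Dx.
    by rewrite ext_sum cmax mul0r addr0.
  move=> i; case: (unliftP ord_max i) => [j ->|->] //.
  have -> : lift ord_max j = widen_ord (leqnSn n) j by apply/val_inj; rewrite /= /bump leqNgt ltn_ord.
  by rewrite cw.
- move=> f Sf; have [a0 [a Hf]] := Hdec f (Sspan f Sf).
  pose k := a0 / c0.
  have S'f1 : S' (fun x => (- k) * f0 x + f x).
    split; first by case: cS => _ SD; apply: SD.
    exists (fun i => a i - k * c i) => x Dx.
    rewrite Hf // Hf0 // (_ : a0 = k * c0); last by rewrite /k divfK.
    rewrite [RHS](eq_bigr (fun i : 'I_m => a i * g' i x - k * (c i * g' i x))); last first.
      by move=> i _; rewrite mulrBl mulrA.
    rewrite sumrB -mulr_sumr; ring.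
  have [d Hd] := bspan _ S'f1.
  exists (ext d k) => x Dx.
  rewrite ext_sum ext_max.
  under eq_bigr do rewrite ext_widen.
  by rewrite -Hd // mulNr addrC addrA subrr add0r.
Qed.

End LA.

Lemma C1_cst (R : realType) : C1 (fun _ : R => (0:R)).
Proof.
split; first by move=> x; exact: derivable_cst.
have -> : derive1 (fun _ : R => (0:R)) = fun _ => 0.
  by apply: funext => x; rewrite derive1_cst.
exact: cst_continuous.
Qed.

Lemma C1_lin (R : realType) (a : R) f h : C1 f -> C1 h -> C1 (fun x => a * f x + h x).
Proof.
move=> [df cf] [dh ch].
have -> : (fun x => a * f x + h x) = (a \*: f + h)%R by [].
split; first by move=> x; apply: derivableD => //; apply: derivableZ.
have -> : derive1 (a \*: f + h) = fun x => a * derive1 f x + derive1 h x.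
  apply: funext => x; rewrite !derive1E deriveD ?deriveZ //.
  exact: derivableZ.
have -> : (fun x => a * derive1 f x + derive1 h x) = ((fun x => a * derive1 f x) + derive1 h)%R by [].
move=> x; apply: continuousD; last exact: ch.
apply: (@continuousZ _ _ _ (fun _ => a) (derive1 f)); last exact: cf.
exact: cst_continuous.
Qed.


Lemma span_spanF (R : realType) (A : set (R -> R)) (s : seq (R -> R)) f :
  A = [set` s] ->
  Defs.span A f <-> spanF setT (size s) (nth (fun _ => 0) s) f.
Proof.
move=> As; split.
  move=> [n [c [gg [Ag ->]]]].
  apply: closed_sum; first exact: spanF_closed.
  move=> i; have : gg i \in s by move: (Ag i); rewrite As.
  move=> gin; rewrite -index_mem in gin.
  exists (fun k => if k == index (gg i) s then 1 else 0) => x _.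
  rewrite (bigD1 (Ordinal gin)) //= eqxx mul1r nth_index ?big1 ?addr0 //.
    by move=> k /eqP kn; rewrite ifF ?mul0r //; apply/eqP => E; apply: kn; apply: val_inj.
  by rewrite -index_mem.
move=> [c Hc]; exists (size s), (fun i => c i), (fun i => nth (fun _ => 0) s i).
split; first by move=> i; rewrite As /=; apply: mem_nth.
by apply: funext => x; rewrite Hc.
Qed.

Section Asm.
Variable R : realType.

Definition catf (m1 : nat) (g1 g2 : nat -> R -> R) (i : nat) : R -> R :=
  if (i < m1)%N then g1 i else g2 (i - m1)%N.

Lemma spanF_concat D m1 m2 g1 g2 f1 f2 :
  spanF D m1 g1 f1 -> spanF D m2 g2 f2 ->
  spanF D (m1 + m2) (catf m1 g1 g2) (fun x => f1 x + f2 x).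
Proof.
move=> [c1 H1] [c2 H2].
exists (fun i => if (i < m1)%N then c1 i else c2 (i - m1)%N) => x Dx.
rewrite H1 // H2 // big_split_ord /=; congr (_ + _); apply: eq_bigr => i _.
  by rewrite /catf /= ltn_ord.
by rewrite /catf /= ltnNge leq_addr /= addKn.
Qed.

Definition Wset (A : set (R -> R)) := [set f | C1 f /\ Defs.span A f].

Lemma W_closed_fdim (A : set (R -> R)) : finite_set A ->
  closedS (Wset A) /\ exists n, fdim setT (Wset A) n.
Proof.
move=> /finite_seqP [s As].
have cW : closedS (Wset A).
  split.
    split; first exact: C1_cst.
    by apply/(span_spanF _ As); case: (spanF_closed setT (size s) (nth (fun _ => 0) s)).
  move=> a f h [Cf Sf] [Ch Sh]; split; first exact: C1_lin.
  apply/(span_spanF _ As); apply: (spanF_closed _ _ _).2; by apply/(span_spanF _ As).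
split => //.
have [n [_ fd]] := fdim_main (D := setT) (m := size s) (g := nth (fun _ => 0) s) cW
  (fun f Hf => proj1 (span_spanF f As) Hf.2).
by exists n.
Qed.

Definition bn n (b : 'I_n -> R -> R) (i : nat) : R -> R :=
  oapp b (fun _ => 0) (insub i).

Fixpoint HH (gam : nat -> R) n (b : 'I_n -> R -> R) (k : nat) : nat -> R -> R :=
  match k with
  | 0 => fun _ _ => 0
  | k'.+1 => catf (k' * n) (HH gam b k') (fun i x => bn b i x * chi gam k' x)
  end.

Lemma Wprime_span (W : set (R -> R)) n (b : 'I_n -> R -> R) (gam : nat -> R) D :
  (forall f, W f -> exists c : 'I_n -> R, forall x, setT x -> f x = \sum_(i < n) c i * b i x) ->
  forall k (v : nat -> R -> R), (forall j, (j < k)%N -> W (v j)) ->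
  spanF D (k * n) (HH gam b k) (fun x => \sum_(j < k) v j x * chi gam j x).
Proof.
move=> bsp; elim => [|k IH] v Wv.
  by exists (fun _ => 0) => x _; rewrite !big_ord0.
rewrite mulSnr /=.
apply: (spanF_ext (f := fun x => \sum_(j < k) v j x * chi gam j x + v k x * chi gam k x)).
  apply: spanF_concat; first by apply: IH => j jk; apply: Wv; apply: ltnW.
  have [c Hc] := bsp _ (Wv k (ltnSn k)).
  exists (fun i => oapp c 0 (insub i)) => x _.
  rewrite Hc // mulr_suml; apply: eq_bigr => i _.
  by rewrite /bn valK /= mulrA.
by move=> x _; rewrite big_ord_recr.
Qed.

End Asm.

Theorem mainTheorem2 (R : realType) (U : set (set (Xfin R)))
    (beta eta : Xfin R -> R) (ell : Xfin R -> nat) (gamma : Xfin R -> nat -> R)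
    (hU : fine_ultrafilter U)
    (hbeta : positive_infinite U beta)
    (heta : infinitesimal U eta)
    (hgrid : grid U beta eta ell gamma)
    (hRG : forall r : R, ae U (fun l => exists j, (j <= ell l)%N /\ gamma l j = r)) :
  exists dC d : Xfin R -> nat,
    [/\ hyperfinite_dim U (fun _ => setT) (C1tilde U) dC,
        hyperfinite_dim U (domB beta) (UR U beta ell gamma) d &
        ae U (fun l => (d l <= ell l * dC l)%N)].
Proof.
case: hU => [[UT _] Umono Uint _ _].
have aeT : forall P : Xfin R -> Prop, (forall l, P l) -> ae U P.
  by move=> P HP; apply: (Umono setT) => // l _; apply: HP.
have aeM : forall P Q : Xfin R -> Prop, ae U P -> (forall l, P l -> Q l) -> ae U Q.
  by move=> P Q HP PQ; apply: (Umono _ _ HP) => l /PQ.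
have aeI : forall P Q : Xfin R -> Prop, ae U P -> ae U Q -> ae U (fun l => P l /\ Q l).
  by move=> P Q HP HQ; apply: (Umono _ _ (Uint _ _ HP HQ)) => l [].
pose W (l : Xfin R) := Wset (proj1_sig l).
have Wcl : forall l, closedS (W l) by move=> l; case: (W_closed_fdim (proj2_sig l)).
have : forall l, exists n, fdim setT (W l) n.
  by move=> l; exact: (W_closed_fdim (proj2_sig l)).2.
case/choice => dC HdC.
pose W' (l : Xfin R) := [set f : R -> R | exists v : nat -> R -> R,
  (forall j, (j < ell l)%N -> W l (v j)) /\
  f = fun x => \sum_(j < ell l) v j x * chi (gamma l) j x].
have W'fd : forall l, exists d, (d <= ell l * dC l)%N /\ fdim (domB beta l) (W' l) d.
  move=> l; have [b [_ _ bsp]] := HdC l.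
  have [W0 WD] := Wcl l.
  apply: (fdim_main (g := HH (gamma l) b (ell l))).
    split.
      exists (fun _ _ => 0); split => // ; apply: funext => x.
      by rewrite big1 // => j _; rewrite mul0r.
    move=> a f h [v [Wv ->]] [v' [Wv' ->]].
    exists (fun j x => a * v j x + v' j x); split.
      by move=> j jl; apply: WD; [apply: Wv | apply: Wv'].
    apply: funext => x; rewrite mulr_sumr -big_split /=; apply: eq_bigr => j _.
    by rewrite mulrDl mulrA.
  move=> f [v [Wv ->]].
  exact: (@Wprime_span _ _ _ b (gamma l) (domB beta l) bsp (ell l) v Wv).
case: (choice W'fd) => d Hd.
exists dC, d; split.
- exists W; split; first by apply: aeT => l; exact: HdC.
  move=> u; split.
    move=> Hu; exists u; split; first exact: Hu.
    by apply: aeT.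
  move=> [w [Hw Hwu]].
  apply: (aeM _ _ (aeI _ _ Hw Hwu)) => l [Wl E].
  have -> : u l = w l by apply: funext => x; apply: E.
  exact: Wl.
- exists W'; split; first by apply: aeT => l; exact: (Hd l).2.
  move=> u; split.
    move=> [v [Hv Hu]].
    exists (fun l x => \sum_(j < ell l) v l j x * chi (gamma l) j x); split => //.
    apply: (aeM _ _ Hv) => l Hl; exists (v l); split => //.
  move=> [w [Hw Hwu]].
  have Hex : forall l, exists v : nat -> R -> R,
     W' l (w l) -> (forall j, (j < ell l)%N -> W l (v j)) /\
       w l = fun x => \sum_(j < ell l) v j x * chi (gamma l) j x.
    move=> l; case: (pselect (W' l (w l))) => [[v Hv]|N].
      by exists v.
    by exists (fun _ _ => 0) => /N.
  case: (choice Hex) => V HV.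
  exists V; split.
    by apply: (aeM _ _ Hw) => l /(HV l) [].
  apply: (aeM _ _ (aeI _ _ Hw Hwu)) => l [/(HV l) [_ E] E2] x Dx.
  by rewrite E2 // E.
- by apply: aeT => l; exact: (Hd l).1.
Qed.
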